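(* Let $n\ge 2$ be an integer and $\alpha>1$. There exists a weighted graph $G=(\{0,\dots,n-1\},w)$ with $\mathrm{cdim}_\alpha(G)=\binom n2$.
   Context: A weighted graph $G=(V,w)$ assigns a nonnegative weight to each unordered pair of distinct vertices; its edge set is $E=\{e:w(e)>0\}$. For $\emptyset\ne X\subsetneq V$, $\Delta(X)$ is the set of edges with exactly one endpoint in $X$, of weight $w(\Delta(X))$ equal to the sum of their weights; $\lambda$ is the minimum cut weight. For $\alpha\ge1$, an $\alpha$-near-mincut is a cut of weight at most $\alpha\lambda$, $\mathcal{M}_\alpha(G)$ is the set of these, $\chi(S)\in\{0,1\}^{|E|}$ is the characteristic vector of $S$ indexed by $E$, and $\mathrm{cdim}_\alpha(G)=\dim\,\mathrm{span}\{\chi(S):S\in\mathcal{M}_\alpha(G)\}$. *)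

(* Defs.v *)
From HB Require Import structures.
From mathcomp Require Import all_boot all_order all_algebra.
From mathcomp Require Import reals.
Set Implicit Arguments. Unset Strict Implicit. Unset Printing Implicit Defensive.
Import Order.TTheory GRing.Theory Num.Theory.
Local Open Scope ring_scope.

Section CutDim.
Variables (R : realType) (n : nat) (w : 'I_n -> 'I_n -> R).

(* A weighted graph on V = 'I_n is a symmetric nonnegative weight function;
   unordered pair {i,j} is represented by (i,j) with i < j. *)
Definition is_weighted_graph : Prop :=
  (forall i j, w i j = w j i) /\ (forall i j, 0 <= w i j).

Definition edges : {set 'I_n * 'I_n} :=
  [set e : 'I_n * 'I_n | (e.1 < e.2)%N && (0 < w e.1 e.2)].

Definition cut (X : {set 'I_n}) : {set 'I_n * 'I_n} :=
  [set e in edges | (e.1 \in X) != (e.2 \in X)].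

Definition cut_weight (X : {set 'I_n}) : R := \sum_(e in cut X) w e.1 e.2.

Definition proper_nonempty (X : {set 'I_n}) : bool := (X != set0) && (X != setT).

(* lambda = minimum cut weight over nonempty proper X; the default value
   (total edge weight) is an upper bound of all cut weights. *)
Definition mincut : R :=
  \big[Num.min/(\sum_(e in edges) w e.1 e.2)]_(X | proper_nonempty X) cut_weight X.

Definition near_mincut (alpha : R) (X : {set 'I_n}) : bool :=
  proper_nonempty X && (cut_weight X <= alpha * mincut).

Definition chi (X : {set 'I_n}) : 'rV[R]_#|edges| :=
  \row_(k < #|edges|) (if enum_val k \in cut X then 1 else 0).

Definition cdim (alpha : R) : nat :=
  \rank (\sum_(X | near_mincut alpha X) <<chi X>>)%MS.

End CutDim.

(* Main.v *)
Require Import Defs.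
From mathcomp Require Import all_boot all_order all_algebra.
From mathcomp Require Import reals.
From mathcomp Require Import zify lra.
Import Order.TTheory GRing.Theory Num.Theory.
Set Implicit Arguments. Unset Strict Implicit. Unset Printing Implicit Defensive.
Local Open Scope ring_scope.

Section Aux.
Variables (R : realType) (n : nat).

Definition Iv (a b : nat) : {set 'I_n} := [set k : 'I_n | (a <= k <= b)%N].
Definition wt (eps : R) (i j : 'I_n) : R :=
  eps + ((@ordS n i == j) + (@ordS n j == i))%N%:R.

Lemma cutE (w : 'I_n -> 'I_n -> R) (pos : forall i j, 0 < w i j)
  (sym : forall i j, w i j = w j i) (X : {set 'I_n}) :
  cut_weight w X = \sum_(i in X) \sum_(j in ~: X) w i j.
Proof.
rewrite pair_big /= /cut_weight /cut /edges.
rewrite !big_mkcond /=.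
transitivity (\sum_(e : 'I_n * 'I_n)
   ((if (e.1 < e.2)%N && (e.1 \in X) && (e.2 \notin X) then w e.1 e.2 else 0)
  + (if (e.1 < e.2)%N && (e.2 \in X) && (e.1 \notin X) then w e.2 e.1 else 0))).
  apply: eq_bigr => [[x y]] _ /=; rewrite !inE /= (pos x y) (sym y x) andbT.
  by case: (x < y)%N; case: (x \in X); case: (y \in X); rewrite /= ?addr0 ?add0r.
rewrite big_split /=.
have swinj : injective (fun p : 'I_n * 'I_n => (p.2, p.1)).
  by move=> [a b] [c d] /= [-> ->].
rewrite [X in _ + X = _](reindex_inj swinj) /= -big_split /= [RHS]big_mkcond /=.
apply: eq_bigr => [[x y]] _ /=; rewrite !inE.
case: (ltngtP x y) => [h|h|/val_inj ->];
  case: (x \in X); case: (y \in X); rewrite /= ?andbF ?addr0 ?add0r //.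
Qed.

Lemma sum_eq_in (A : {set 'I_n}) (c : 'I_n) :
  \sum_(j in A) ((c == j)%:R : R) = (c \in A)%:R.
Proof.
rewrite big_mkcond (bigD1 c) //= big1 ?addr0; first by rewrite eqxx; case: (c \in A).
move=> j /negbTE; rewrite eq_sym => ->; by case: (j \in A).
Qed.

Lemma cw_wt (eps : R) (X : {set 'I_n}) : 0 < eps ->
  cut_weight (wt eps) X = eps *+ (#|~: X| * #|X|)
    + \sum_(i in X) (@ordS n i \notin X)%:R + \sum_(j in ~: X) (@ordS n j \in X)%:R.
Proof.
move=> e0; rewrite cutE; last first.
- by move=> i j; rewrite /wt addnC.
- by move=> i j; rewrite /wt ltr_wpDr // ler0n.
rewrite /wt.
under eq_bigr => i _ do (under eq_bigr => j _ do rewrite natrD addrA).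
under eq_bigr => i _ do (rewrite big_split /= big_split /=).
rewrite big_split big_split /=.
congr (_ + _ + _).
  by rewrite (eq_bigr (fun _ => eps *+ #|~: X|)) ?sumr_const ?mulrnA // => i _; rewrite sumr_const.
  by apply: eq_bigr => i _; rewrite sum_eq_in inE.
rewrite exchange_big /=; apply: eq_bigr => j _; exact: sum_eq_in.
Qed.

Lemma iter_ordS (i : 'I_n) k : val (iter k (@ordS n) i) = ((i + k) %% n)%N.
Proof.
elim: k => [|k IH] /=; first by rewrite addn0 modn_small.
by rewrite IH addnS -addn1 modnDml addn1.
Qed.

Lemma closed_full (X : {set 'I_n}) (i0 : 'I_n) : i0 \in X ->
  (forall i, i \in X -> @ordS n i \in X) -> forall j, j \in X.
Proof.
move=> Hi0 Hc.
have Hk : forall k, iter k (@ordS n) i0 \in X by elim => //= k IH; apply: Hc.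
move=> j; have -> : j = iter (j + n - i0)%N (@ordS n) i0.
  apply: val_inj; rewrite iter_ordS.
  have -> : (i0 + (j + n - i0) = j + n)%N by have := ltn_ord i0; lia.
  by rewrite modnDr modn_small.
exact: Hk.
Qed.

Lemma exists_out (X : {set 'I_n}) (i0 j0 : 'I_n) : i0 \in X -> j0 \notin X ->
  exists i, (i \in X) && (@ordS n i \notin X).
Proof.
move=> Hi Hj; case: (pickP (fun i => (i \in X) && (@ordS n i \notin X))) => [i Hi'|H].
  by exists i.
exfalso; move/negP: Hj; apply; apply: (closed_full Hi _ j0) => i iX.
by move: (H i); rewrite iX /= => /negbFE.
Qed.

Lemma proper_elems (X : {set 'I_n}) : proper_nonempty X ->
  exists i0 j0, (i0 \in X) /\ (j0 \notin X).
Proof.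
case/andP => /set0Pn [i0 Hi] HT.
case: (pickP (fun j => j \notin X)) => [j Hj|H]; first by exists i0, j.
case/negP: HT; apply/eqP/setP => j; rewrite inE; exact: negbFE (H j).
Qed.

Lemma sum_ge1 (A : {set 'I_n}) (F : 'I_n -> R) i : i \in A -> 1 <= F i ->
  (forall j, 0 <= F j) -> 1 <= \sum_(j in A) F j.
Proof.
move=> iA H1 H0; rewrite (bigD1 i) //=; apply: (le_trans H1).
by rewrite lerDl; apply: sumr_ge0.
Qed.

Lemma sum_le1 (A : {set 'I_n}) (F : 'I_n -> R) k0 :
  (forall j, 0 <= F j) -> (forall j, j \in A -> j != k0 -> F j = 0) -> F k0 <= 1 ->
  \sum_(j in A) F j <= 1.
Proof.
move=> H0 Hz H1; case kA: (k0 \in A).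
  rewrite (bigD1 k0) //= big1 ?addr0 // => j /andP[jA jk]; exact: Hz.
rewrite big1 ?ler01 // => j jA; apply: Hz => //; apply: contraTneq jA => ->.
by rewrite kA.
Qed.


Lemma card_lt_pairs :
  #|[set e : 'I_n * 'I_n | (e.1 < e.2)%N]| = 'C(n, 2).
Proof.
rewrite -sum1_card big_mkcond /=.
rewrite (eq_bigr (fun e : 'I_n * 'I_n => ((e.1 < e.2)%N : nat))); last first.
  by move=> e _; rewrite inE; case: (_ < _)%N.
rewrite -(pair_bigA _ (fun i j : 'I_n => ((i < j)%N : nat))) /= exchange_big /=.
rewrite (eq_bigr (fun j : 'I_n => val j)); last first.
  move=> j _; have jn := ltn_ord j.
  rewrite -(big_mkord xpredT (fun i => ((i < j)%N : nat))).
  rewrite (big_cat_nat (leq0n j) (ltnW jn)) /=.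
  rewrite (@eq_big_nat _ _ _ 0 j _ (fun _ => 1%N)); last by move=> i /andP[_ ->].
  rewrite (@eq_big_nat _ _ _ j n _ (fun _ => 0%N)); last first.
    by move=> i /andP[h _]; rewrite ltnNge h.
  by rewrite !sum_nat_const_nat muln0 muln1 addn0 subn0.
by rewrite -(big_mkord xpredT (fun j => j)) bin2_sum.
Qed.

Lemma nat_key (x y i j : nat) : (x < y)%N -> (i < j)%N ->
  (((i.+1 <= x <= j) != (i.+1 <= y <= j)) + ((i <= x <= j.-1) != (i <= y <= j.-1))
  = ((i <= x <= j) != (i <= y <= j)) + ((i.+1 <= x <= j.-1) != (i.+1 <= y <= j.-1))
    + 2 * ((x == i) && (y == j)))%N.
Proof. move=> h1 h2; lia. Qed.

Lemma ifR (b : bool) : (if b then 1 else 0 : R) = (b : nat)%:R.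
Proof. by case: b. Qed.




End Aux.

Section Eps.
Variables (R : realType) (n : nat) (eps : R).
Hypotheses (e0 : 0 < eps) (n2 : (2 <= n)%N).

Lemma edgesE : edges (wt eps) = [set e : 'I_n * 'I_n | (e.1 < e.2)%N].
Proof.
apply/setP => e; rewrite !inE /wt ltr_wpDr ?andbT // ler0n //.
Qed.

Lemma in_cut (w : 'I_n -> 'I_n -> R) X e : e \in edges w ->
  (e \in cut w X) = ((e.1 \in X) != (e.2 \in X)).
Proof. by rewrite /cut inE => ->. Qed.

Lemma LB (X : {set 'I_n}) : proper_nonempty X -> 2 <= cut_weight (wt eps) X.
Proof.
move=> HP; have [i0 [j0 [Hi Hj]]] := proper_elems HP.
rewrite cw_wt //.
have [i /andP[iX iO]] := exists_out Hi Hj.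
have Hj' : j0 \in ~: X by rewrite inE.
have Hi' : i0 \notin ~: X by rewrite inE negbK.
have [j /andP[jX jO]] := exists_out Hj' Hi'.
rewrite inE negbK in jO.
have h1 : 1 <= \sum_(i in X) (@ordS n i \notin X)%:R :> R.
  by apply: (sum_ge1 iX); [rewrite iO | move=> k; rewrite ler0n].
have h2 : 1 <= \sum_(j in ~: X) (@ordS n j \in X)%:R :> R.
  by apply: (sum_ge1 jX); [rewrite jO | move=> k; rewrite ler0n].
have h0 : 0 <= eps *+ (#|~: X| * #|X|) by rewrite mulrn_wge0 // ltW.
lra.
Qed.

Lemma bool_le1 (b : bool) : (b : nat)%:R <= 1 :> R.
Proof. by case: b; rewrite ?ler01. Qed.

Lemma IvUB (a b : nat) : (a <= n)%N -> (b < n)%N ->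
  cut_weight (wt eps) (Iv n a b) <= eps *+ (n * n) + 2.
Proof.
move=> an bn; rewrite cw_wt //.
have h1 : eps *+ (#|~: Iv n a b| * #|Iv n a b|) <= eps *+ (n * n).
  apply: ler_wpMn2l; first exact: ltW.
  by apply: leq_mul; apply: leq_trans (max_card _) _; rewrite card_ord.
have h2 : \sum_(i in Iv n a b) (@ordS n i \notin Iv n a b)%:R <= 1 :> R.
  apply: (@sum_le1 _ _ _ _ (Ordinal bn)); [by move=> j; rewrite ler0n| |exact: bool_le1].
  move=> j jI jne; apply/eqP; rewrite pnatr_eq0 eqb0 negbK.
  have jb : (j : nat) != b by apply: contra jne => /eqP h; apply/eqP/val_inj.
  move: jI; rewrite !inE /= => jI; have := ltn_ord j.
  case: (ltnP j.+1 n) => h; [by rewrite modn_small //; lia|].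
  have -> : j.+1 = n by lia.
  rewrite modnn; lia.
have h3 : \sum_(j in ~: Iv n a b) (@ordS n j \in Iv n a b)%:R <= 1 :> R.
  pose c := if a == 0%N then n.-1 else a.-1.
  have cn : (c < n)%N by rewrite /c; case: ifP => /eqP ?; lia.
  apply: (@sum_le1 _ _ _ _ (Ordinal cn)); [by move=> j; rewrite ler0n| |exact: bool_le1].
  move=> j jI jne; apply/eqP; rewrite pnatr_eq0 eqb0.
  have jb : (j : nat) != c by apply: contra jne => /eqP h; apply/eqP/val_inj.
  move: jI jb; rewrite !inE /= /c => jI.
  have := ltn_ord j.
  case: ifP => /eqP ha jb jn;
  (case: (ltnP j.+1 n) => h; [by rewrite modn_small //; lia|]);
  (have -> : j.+1 = n by lia); rewrite modnn; lia.
lra.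
Qed.

Lemma mincut_ge2 : 2 <= mincut (@wt R n eps).
Proof.
rewrite /mincut; apply: (big_ind (fun x => 2 <= x)).
- have o0 : (0 < n)%N by lia.
  have o1 : (1 < n)%N by lia.
  have HP : proper_nonempty (Iv n 0 0).
    apply/andP; split.
      by apply/set0Pn; exists (Ordinal o0); rewrite inE.
    apply/negP => /eqP h.
    have : Ordinal o1 \in Iv n 0 0 by rewrite h inE.
    by rewrite inE.
  rewrite (big_setID (cut (wt eps) (Iv n 0 0))) /=.
  have -> : edges (wt eps) :&: cut (wt eps) (Iv n 0 0) = cut (wt eps) (Iv n 0 0).
    by apply/setIidPr/subsetP => e; rewrite inE => /andP[].
  apply: le_trans (LB HP) _; rewrite lerDl; apply: sumr_ge0 => e _.
  by rewrite /wt addr_ge0 ?ler0n ?ltW.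
- by move=> x y hx hy; rewrite le_min hx hy.
- by move=> X HX; apply: LB.
Qed.

End Eps.

Lemma chi_triv (R : realType) (n : nat) (w : 'I_n -> 'I_n -> R) (X : {set 'I_n}) :
  (X = set0 \/ X = setT) -> chi w X = 0.
Proof.
move=> HX; apply/rowP => k; rewrite !mxE /cut inE.
by case: HX => ->; rewrite !inE ?andbF.
Qed.

Theorem mainTheorem18 (R : realType) (n : nat) (alpha : R) :
  (2 <= n)%N -> 1 < alpha ->
  exists w : 'I_n -> 'I_n -> R,
    is_weighted_graph w /\ cdim w alpha = 'C(n, 2).
Proof.
move=> n2 a1.
have n0 : (0 < n * n)%N by rewrite muln_gt0; apply/andP; split; lia.
pose eps := (alpha - 1) / (n * n)%:R.
have e0 : 0 < eps by rewrite divr_gt0 ?subr_gt0 // ltr0n.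
have epsE : eps *+ (n * n) = alpha - 1.
  by rewrite -mulr_natr divfK // pnatr_eq0 -lt0n.
exists (@wt R n eps); split.
  split => i j; first by rewrite /wt addnC.
  by rewrite /wt addr_ge0 ?ler0n ?ltW.
rewrite /cdim.
set S := (\sum_(X | _) _)%MS.
have Hchi : forall X, proper_nonempty X -> cut_weight (wt eps) X <= alpha + 1 ->
    (chi (wt eps) X <= S)%MS.
  move=> X HX Hc; apply: (sumsmx_sup X); last by rewrite genmxE.
  rewrite /near_mincut HX /=.
  have h2 := mincut_ge2 e0 n2.
  have a0 : 0 <= alpha by apply: ltW; apply: lt_trans a1.
  have h3 := ler_wpM2l a0 h2.
  lra.
have Hiv : forall a b, (a <= n)%N -> (b < n)%N -> (chi (wt eps) (Iv n a b) <= S)%MS.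
  move=> a b an bn; case HP: (proper_nonempty (Iv n a b)).
    apply: Hchi => //; apply: le_trans (IvUB e0 n2 an bn) _; rewrite epsE; lra.
  rewrite chi_triv ?sub0mx //.
  move/negbT: HP; rewrite negb_and !negbK => /orP[/eqP->|/eqP->]; by [left|right].
apply/eqP; rewrite eqn_leq; apply/andP; split.
  by apply: leq_trans (rank_leq_col _) _; rewrite (@edgesE _ n _ e0) card_lt_pairs.
have -> : 'C(n, 2) = #|edges (@wt R n eps)| by rewrite (@edgesE _ n _ e0) card_lt_pairs.
suff H1 : ((1%:M : 'M[R]_#|edges (@wt R n eps)|) <= S)%MS.
  by have := mxrankS H1; rewrite mxrank1.
apply/row_subP => k; rewrite row1.
case Ee: (enum_val k) => [x y].
have xy : (x < y)%N.
  by move: (enum_valP k); rewrite Ee (@edgesE _ n _ e0) inE.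
have yn := ltn_ord y.
have -> : ('e_k : 'rV[R]_#|edges (@wt R n eps)|) = 2^-1 *: (chi (wt eps) (Iv n x.+1 y)
    + chi (wt eps) (Iv n x y.-1)
    + (-1) *: (chi (wt eps) (Iv n x y) + chi (wt eps) (Iv n x.+1 y.-1))).
  apply/rowP => m; rewrite !mxE.
  have mE := enum_valP m.
  rewrite !(in_cut _ mE).
  case Em: (enum_val m) => [x' y'].
  have m12 : (x' < y')%N.
    by move: (enum_valP m); rewrite Em (@edgesE _ n _ e0) inE.
  have -> : (m == k) = ((x' == x) && (y' == y)).
    by rewrite -(inj_eq enum_val_inj) Ee Em xpair_eqE.
  rewrite !inE /= !ifR -!val_eqE /=.
  have := congr1 (fun t : nat => t%:R : R) (nat_key m12 xy).
  rewrite !natrD => HR.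
  lra.
apply: scalemx_sub; apply: addmx_sub; first apply: addmx_sub.
- by apply: Hiv; lia.
- by apply: Hiv; lia.
- by apply: scalemx_sub; apply: addmx_sub; apply: Hiv; lia.
Qed.
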